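(* Let $B_n$ be the number of bidirectional ballot sequences of length $n$. Then $B_n=\Omega(2^n/n)$.
   Context: A 0-1 sequence of length $n$ is a bidirectional ballot sequence if every nonempty prefix and every nonempty suffix of it contains strictly more 1's than 0's. *)

(* Defs.v *)
From mathcomp Require Import all_boot.
Set Implicit Arguments. Unset Strict Implicit. Unset Printing Implicit Defensive.

(* A 0-1 sequence is encoded as a seq bool: true = 1, false = 0. *)
Definition ones (s : seq bool) : nat := count id s.
Definition zeros (s : seq bool) : nat := count negb s.

Definition bidirectional_ballot (s : seq bool) : bool :=
  [forall k : 'I_(size s).+1,
     (0 < k) ==> (zeros (take k s) < ones (take k s))
             && (zeros (drop (size s - k) s) < ones (drop (size s - k) s))].

Definition B (n : nat) : nat :=
  #|[set t : n.-tuple bool | bidirectional_ballot t]|.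

(* Main.v *)
Require Import Defs.
From mathcomp Require Import all_boot zify.

Fixpoint allseq (n : nat) : seq (seq bool) :=
  if n is m.+1 then map (cons false) (allseq m) ++ map (cons true) (allseq m)
  else [:: [::]].

Lemma consb_inj (b : bool) : injective (cons b).
Proof. by move=> x y []. Qed.

Lemma notin_mapc b c (s : seq bool) l : b != c -> (b :: s \in map (cons c) l) = false.
Proof. by move=> bc; apply/mapP => [[t _ [e _]]]; rewrite e eqxx in bc. Qed.

Lemma mem_allseq n s : (s \in allseq n) = (size s == n).
Proof.
elim: n s => [|n IH] [|b s] //=.
- by rewrite mem_cat; apply/negbTE; rewrite negb_or; apply/andP; split; apply/mapP => [[t _]].
- rewrite mem_cat eqSS -IH; case: b.
  + by rewrite (mem_map (@consb_inj true)) notin_mapc.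
  + by rewrite (mem_map (@consb_inj false)) notin_mapc // orbF.
Qed.

Lemma uniq_allseq n : uniq (allseq n).
Proof.
elim: n => [|n IH] //=.
rewrite cat_uniq !(map_inj_uniq (@consb_inj _)) IH /=.
rewrite andbT; apply/hasPn => x /mapP [t _ ->]; by rewrite notin_mapc.
Qed.

Lemma size_allseq n : size (allseq n) = 2 ^ n.
Proof. elim: n => //= n IH; rewrite size_cat !size_map IH expnS; lia. Qed.

Lemma perm_allseq n l : uniq l -> (forall s, (s \in l) = (size s == n)) ->
  perm_eq l (allseq n).
Proof.
move=> ul ml; apply: uniq_perm => // [|s]; first exact: uniq_allseq.
by rewrite ml mem_allseq.
Qed.

Lemma count_allseqS (a : pred (seq bool)) n :
  count a (allseq n.+1) = count (fun s => a (false :: s)) (allseq n)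
                        + count (fun s => a (true :: s)) (allseq n).
Proof. by rewrite /= count_cat !count_map. Qed.

Lemma B_count n : B n = count bidirectional_ballot (allseq n).
Proof.
rewrite /B cardsE cardE /enum_mem size_filter.
rewrite (@eq_count _ _ (fun t : n.-tuple bool => bidirectional_ballot t)); last first.
  by move=> t; rewrite !inE.
rewrite -(count_map val bidirectional_ballot).
apply: (permP _ _); apply: perm_allseq.
- rewrite (map_inj_uniq val_inj); rewrite -enumT; exact: enum_uniq.
- move=> s; apply/mapP/eqP => [[t _ ->]|sn]; first exact: size_tuple.
  exists (Tuple (introT eqP sn)) => //.
  have := mem_enum (mem (@predT (n.-tuple bool))) (Tuple (introT eqP sn)).
  by rewrite enumT.
Qed.

Fixpoint nn (j : nat) (s : seq bool) : bool :=
  match s with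
  | [::] => true
  | b :: s' => if b then nn j.+1 s' else (if j is j'.+1 then nn j' s' else false)
  end.

Definition PP (s : seq bool) : bool := if s is b :: s' then b && nn 0 s' else true.
Definition QQ (s : seq bool) : bool := PP (rev s).

Lemma nnE j s : nn j s <-> (forall k, zeros (take k s) <= ones (take k s) + j).
Proof.
elim: s j => [|b s IH] j /=.
  by split=> // _ k; rewrite /zeros /ones take0 /=.
case: b.
- rewrite IH; split=> H k.
  + case: k => [|k]; first by rewrite /zeros /ones take0.
    rewrite /= /zeros /ones /= -/(zeros _) -/(ones _); have := H k; lia.
  + have := H k.+1; rewrite /= /zeros /ones /= -/(zeros _) -/(ones _); lia.
- case: j => [|j].
  + split=> // H; have := H 1; rewrite /= /zeros /ones /= take0 /=; lia.
  + rewrite IH; split=> H k.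
    * case: k => [|k]; first by rewrite /zeros /ones take0.
      rewrite /= /zeros /ones /= -/(zeros _) -/(ones _); have := H k; lia.
    * have := H k.+1; rewrite /= /zeros /ones /= -/(zeros _) -/(ones _); lia.
Qed.

Lemma PPE s : PP s <-> (forall k, 0 < k <= size s -> zeros (take k s) < ones (take k s)).
Proof.
case: s => [|b s] /=; first by split=> // _ k; lia.
case: b => /=.
- rewrite nnE; split=> H k.
  + case: k => [|k] //= Hk; rewrite /zeros /ones /= -/(zeros _) -/(ones _).
    have := H k; lia.
  + case: (leqP k (size s)) => ks.
    * have := H k.+1; rewrite /= /zeros /ones /= -/(zeros _) -/(ones _); lia.
    * have := H (size s).+1; rewrite /= take_size (take_oversize (ltnW ks)).
      rewrite /zeros /ones /= -/(zeros _) -/(ones _); lia.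
- split=> // H; have := H 1; rewrite /= /zeros /ones /= take0 /=; lia.
Qed.

Lemma QQE s : QQ s <-> (forall k, 0 < k <= size s ->
   zeros (drop (size s - k) s) < ones (drop (size s - k) s)).
Proof.
rewrite /QQ PPE size_rev; split=> H k Hk; have := H k Hk;
  by rewrite take_rev /zeros /ones !count_rev.
Qed.

Lemma BBE s : bidirectional_ballot s = PP s && QQ s.
Proof.
apply/idP/andP.
- move/forallP=> H; split; [apply/PPE | apply/QQE] => k /andP [k0 ks];
  have := H (Ordinal (n:=(size s).+1) (m:=k) ks); rewrite /= k0 /= => /andP [] //.
- move=> [/PPE H1 /QQE H2]; apply/forallP => k; apply/implyP => k0.
  have ks : 0 < k <= size s by rewrite k0 -ltnS ltn_ord.
  by rewrite H1 // H2.
Qed.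

Definition le (s t : seq bool) : bool := all2 (fun a b => a ==> b) s t.

Lemma le_size s t : le s t -> size s = size t.
Proof. elim: s t => [|a s IH] [|b t] //= /andP [_ /IH ->] //. Qed.

Lemma le_take k s t : le s t -> le (take k s) (take k t).
Proof.
elim: s t k => [|a s IH] [|b t] [|k] //= /andP [-> /IH]; exact.
Qed.

Lemma le_drop k s t : le s t -> le (drop k s) (drop k t).
Proof.
elim: s t k => [|a s IH] [|b t] [|k] //= H //.
by apply: IH; case/andP: H.
Qed.

Lemma le_count s t : le s t -> ones s <= ones t /\ zeros t <= zeros s.
Proof.
rewrite /ones /zeros.
elim: s t => [|a s IH] [|b t] //= /andP [ab /IH [H1 H2]].
by case: a b ab => [] [] //= _; lia.
Qed.

Lemma le_refl s : le s s.
Proof. by elim: s => //= a s ->; rewrite implybb. Qed.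

Lemma PP_mono s t : le s t -> PP s -> PP t.
Proof.
move=> st /PPE H; apply/PPE => k; rewrite -(le_size _ _ st) => /H.
have [H1 H2] := le_count _ _ (le_take k _ _ st); lia.
Qed.

Lemma QQ_mono s t : le s t -> QQ s -> QQ t.
Proof.
move=> st /QQE H; apply/QQE => k; rewrite -(le_size _ _ st) => /H.
have [H1 H2] := le_count _ _ (le_drop (size s - k) _ _ st); lia.
Qed.

Lemma count_mono (a b : pred (seq bool)) l : (forall x, a x -> b x) -> count a l <= count b l.
Proof. move=> ab; exact: sub_count. Qed.

Lemma harris n (P Q : pred (seq bool)) :
  (forall s t, le s t -> P s -> P t) -> (forall s t, le s t -> Q s -> Q t) ->
  count P (allseq n) * count Q (allseq n) <= count (predI P Q) (allseq n) * 2 ^ n.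
Proof.
elim: n P Q => [|n IH] P Q HP HQ.
  by rewrite /=; case: (P [::]); case: (Q [::]).
rewrite !count_allseqS expnS.
have le0 s : le (false :: s) (true :: s) by rewrite /= le_refl.
have a01 : count (fun s => P (false :: s)) (allseq n) <= count (fun s => P (true :: s)) (allseq n).
  by apply: count_mono => s; apply: HP.
have b01 : count (fun s => Q (false :: s)) (allseq n) <= count (fun s => Q (true :: s)) (allseq n).
  by apply: count_mono => s; apply: HQ.
have leb b s t : le s t -> le (b :: s) (b :: t) by move=> st; rewrite /= implybb.
have I0 := IH (fun s => P (false :: s)) (fun s => Q (false :: s))
  (fun s t st => HP _ _ (leb false s t st)) (fun s t st => HQ _ _ (leb false s t st)).
have I1 := IH (fun s => P (true :: s)) (fun s => Q (true :: s))
  (fun s t st => HP _ _ (leb true s t st)) (fun s t st => HQ _ _ (leb true s t st)).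
rewrite /= in I0 I1.
have -> : count (fun s => predI P Q (false :: s)) (allseq n) =
  count (predI (fun s => P (false :: s)) (fun s => Q (false :: s))) (allseq n) by [].
have -> : count (fun s => predI P Q (true :: s)) (allseq n) =
  count (predI (fun s => P (true :: s)) (fun s => Q (true :: s))) (allseq n) by [].
nia.
Qed.

Lemma count_QQ n : count QQ (allseq n) = count PP (allseq n).
Proof.
rewrite /QQ -(count_map rev PP); apply: (permP _ _); apply: perm_allseq.
- rewrite (map_inj_uniq (can_inj (@revK _))); exact: uniq_allseq.
- move=> s; apply/mapP/eqP => [[t tin ->]|sn]; first by rewrite size_rev; move: tin; rewrite mem_allseq => /eqP.
  by exists (rev s); rewrite ?revK // mem_allseq size_rev sn.
Qed.

Lemma count_PP m : count PP (allseq m.+1) = count (nn 0) (allseq m).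
Proof.
rewrite count_allseqS /=.
have -> : count (fun _ => false) (allseq m) = 0 by elim: (allseq m).
by [].
Qed.

Definition Dp j (s : seq bool) : bool :=
  (zeros s <= ones s + j) && (ones s <= zeros s + j + 1).

Lemma count_add4 (a b c d : pred (seq bool)) l :
  (forall x, a x + b x = c x + d x) -> count a l + count b l = count c l + count d l.
Proof.
move=> H; elim: l => //= x l IH; have := H x; lia.
Qed.

Lemma nn_D m j : count (nn j) (allseq m) = count (Dp j) (allseq m).
Proof.
elim: m j => [|m IH] j.
  by rewrite /= /Dp /zeros /ones /=; lia.
rewrite !count_allseqS /=.
case: j => [|j].
- have -> : count (fun _ => false) (allseq m) = 0 by elim: (allseq m).
  rewrite IH add0n.
  have := count_add4 (Dp 1) (fun _ => false) (fun s => Dp 0 (false :: s))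
     (fun s => Dp 0 (true :: s)) (allseq m).
  have -> : count (fun _ => false) (allseq m) = 0 by elim: (allseq m).
  rewrite addn0 => -> // x.
  rewrite /Dp /zeros /ones /= -/(zeros _) -/(ones _).
  move: (zeros x) (ones x) => z o.
  repeat (case: leqP => ?); lia.
- rewrite !IH.
  apply: count_add4 => x.
  rewrite /Dp /zeros /ones /= -/(zeros _) -/(ones _).
  move: (zeros x) (ones x) => z o.
  repeat (case: leqP => ?); lia.
Qed.

Lemma count_ones m k : count (fun s => ones s == k) (allseq m) = 'C(m, k).
Proof.
elim: m k => [|m IH] k; first by case: k.
rewrite count_allseqS /ones /=.
rewrite (@eq_count _ (fun s => 0 + count id s == k) (fun s => ones s == k)) // IH.
case: k => [|k].
- have -> : count (fun s => 1 + count id s == 0) (allseq m) = 0 by elim: (allseq m).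
  by rewrite !bin0.
- by rewrite (@eq_count _ _ (fun s => ones s == k)) // IH binS addnC.
Qed.

Lemma ones_zeros s : ones s + zeros s = size s.
Proof. by rewrite /ones /zeros -(count_predC id s). Qed.

Lemma D0_bin m : 'C(m, uphalf m) <= count (Dp 0) (allseq m).
Proof.
rewrite -count_ones.
have H : forall l, (forall s, s \in l -> size s = m) ->
  count (fun s => ones s == uphalf m) l <= count (Dp 0) l.
  elim => //= x l IH Hl; apply: leq_add; last by apply: IH => s sl; apply: Hl; rewrite inE sl orbT.
  case: eqP => //= ox; rewrite /Dp.
  have := ones_zeros x; rewrite (Hl x) ?inE ?eqxx // ox uphalf_half.
  have := odd_double_half m; rewrite -addnn.
  case: (odd m) => /= E1 E2; rewrite lt0b; apply/andP; split; lia.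
by apply: H => s; rewrite mem_allseq => /eqP.
Qed.

Lemma central k : 16 ^ k <= 'C(k.*2, k) ^ 2 * (4 * k + 1).
Proof.
elim: k => [|k IH] //.
have E1 : k.*2.+2 * 'C(k.*2.+1, k) = k.+1 * 'C(k.*2.+2, k.+1) := mul_bin_diag _ _.
have E2 : k.*2.+1 * 'C(k.*2, k) = k.+1 * 'C(k.*2.+1, k.+1) := mul_bin_diag _ _.
have E3 : 'C(k.*2.+1, k) = 'C(k.*2.+1, k.+1).
  rewrite -bin_sub; last by lia.
  by congr 'C(_, _); lia.
rewrite doubleS expnS.
move: IH E1 E2 E3; set X := 'C(k.*2, k); set Y := 'C(k.*2.+2, k.+1);
  set Z := 'C(k.*2.+1, k); set W := 'C(k.*2.+1, k.+1); set T := 16 ^ k.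
move=> IH E1 E2 E3.
have YZ : Y = 2 * Z.
  apply/eqP; rewrite -(@eqn_pmul2l k.+1) //; apply/eqP; rewrite -E1; lia.
have EY : Y * k.+1 = X * 2 * (k.*2.+1) by rewrite YZ E3 -mulnA (mulnC W) -E2; lia.
rewrite -(@leq_pmul2l (k.+1 ^ 2)) ?expn_gt0 //.
have -> : k.+1 ^ 2 * (Y ^ 2 * (4 * k.+1 + 1)) = (Y * k.+1) ^ 2 * (4 * k.+1 + 1) by rewrite expnMn; lia.
rewrite EY.
have P : 16 * k.+1 ^2 * (4 * k + 1) <= 4 * (k.*2.+1)^2 * (4 * k.+1 + 1) by nia.
have Q : k.+1 ^ 2 * (16 * T) <= k.+1 ^ 2 * 16 * (X ^ 2 * (4 * k + 1)).
  by rewrite -mulnA leq_pmul2l ?expn_gt0 // leq_pmul2l.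
apply: (leq_trans Q).
have -> : (X * 2 * k.*2.+1) ^ 2 * (4 * k.+1 + 1) = X ^ 2 * (4 * (k.*2.+1)^2 * (4 * k.+1 + 1)).
  rewrite !expnMn; lia.
have -> : k.+1 ^ 2 * 16 * (X ^ 2 * (4 * k + 1)) = X ^ 2 * (16 * k.+1 ^2 * (4 * k + 1)) by lia.
by rewrite leq_mul2l P orbT.
Qed.

Lemma pow4 j : 2 ^ j * 2 ^ j = 4 ^ j.
Proof. by rewrite -expnMn. Qed.

Lemma pow16 k : 4 ^ (k.*2) = 16 ^ k.
Proof. by rewrite -mul2n expnM. Qed.

Lemma A_bound m : 2 ^ m.+1 * 2 ^ m.+1 <= 32 * m.+1 * 'C(m, uphalf m) ^ 2.
Proof.
have Em := odd_double_half m; rewrite uphalf_half pow4.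
move: Em; set k := m./2; case: (odd m) => /= Em; rewrite -{}Em.
- have C1 := central k.
  have C2 : 'C(k.*2, k) <= 'C(k.*2.+1, k.+1) by rewrite binS; lia.
  have C3 : 'C(k.*2, k) ^ 2 <= 'C(k.*2.+1, k.+1) ^ 2 by rewrite leq_exp2r.
  rewrite !add1n.
  have -> : 4 ^ (k.*2.+2) = 16 * 16 ^ k by rewrite !expnS pow16 mulnA.
  move: C1 C3; set X := 'C(k.*2.+1, k.+1) ^ 2; set Y := 'C(k.*2, k) ^ 2.
  set T := 16 ^ k => C1 C3.
  nia.
- have C1 := central k.
  rewrite !add0n.
  have -> : 4 ^ (k.*2.+1) = 4 * 16 ^ k by rewrite !expnS pow16.
  move: C1; set Y := 'C(k.*2, k) ^ 2.
  set T := 16 ^ k => C1.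
  nia.
Qed.

Theorem proposition13 :
  exists c N : nat, 0 < c /\ forall n : nat, N <= n -> 2 ^ n <= c * n * B n.
Proof.
exists 32, 1; split => // [[|m]] // _.
have HA : 'C(m, uphalf m) <= count PP (allseq m.+1) by rewrite count_PP nn_D; exact: D0_bin.
have HH := harris m.+1 PP QQ PP_mono QQ_mono.
rewrite count_QQ in HH.
have HB : count (predI PP QQ) (allseq m.+1) = B m.+1.
  by rewrite B_count; apply: eq_count => s; rewrite BBE.
rewrite HB in HH.
have HAB := A_bound m.
rewrite -(@leq_pmul2r (2 ^ m.+1)) ?expn_gt0 //.
apply: (leq_trans HAB).
have H2 : 'C(m, uphalf m) ^ 2 <= count PP (allseq m.+1) * count PP (allseq m.+1).
  by rewrite expnS expn1 leq_mul.
rewrite -[_ * B m.+1 * _]mulnA leq_pmul2l //.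
apply: (leq_trans H2); exact: HH.
Qed.
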